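(* Let $\Gamma$ be a single-player extensive-form game without absentmindedness, and let $\mathscr C$ be the class of games sharing the same game tree and infoset partition as $\Gamma$ (with arbitrary nonnegative utilities). Then $\mathrm{VoR}^{\mathrm{opt}}(\mathscr C)\le\max_{h\in\mathcal H_c}\beta(h)$, where by convention this maximum is $1$ if $\mathcal H_c=\emptyset$.
   Context: A single-player extensive-form game consists of a finite rooted tree (nodes $\mathcal H$, leaves $\mathcal Z$, actions $A_h$); nonterminal nodes belong to Player 1 or to chance; $\mathcal H_c$ is the set of chance nodes, each with a fixed distribution on its actions; Player 1 has utility $u_1:\mathcal Z\to\mathbb R_{\ge0}$ and a partition of its nodes into infosets with common action sets. The game tree consists of nodes, actions and chance distributions. For a node $h$, $\mathrm{obs}(h)$ lists (player, infoset, action) along the root-to-$h$ path (excluding $h$); $\mathrm{obs}_1(h)$ restricts to Player 1. Absentmindedness: some infoset appears more than once in $\mathrm{obs}(h)$ for some $h$. $\mathrm{pr}_1(\Gamma)$ has the same tree and utilities with each infoset partitioned into classes of $h\sim h'\iff\mathrm{obs}_1(h)=\mathrm{obs}_1(h')$. $u_1(\mathrm{opt}(\cdot))$ is the maximum expected utility over behavioral strategies; $\mathrm{VoR}^{\mathrm{opt}}(\Gamma)=u_1(\mathrm{opt}(\mathrm{pr}_1(\Gamma)))/u_1(\mathrm{opt}(\Gamma))$; $\mathrm{VoR}^{\mathrm{opt}}(\mathscr C)=\sup_{\Gamma'\in\mathscr C}\mathrm{VoR}^{\mathrm{opt}}(\Gamma')$. Branching factor: for $h\in\mathcal H_c$ and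 $a\in A_h$, $H_{ha}$ is the set of chance nodes in the subtree rooted at the child of $h$ via $a$; $b_h(a)=1$ if $H_{ha}=\emptyset$, else $\max_{h'\in H_{ha}}\beta(h')$; $\beta(h)=\sum_{a\in A_h}b_h(a)$. *)

(* Defs.v *)
From HB Require Import structures.
From mathcomp Require Import all_boot all_order all_algebra.
From mathcomp Require Import classical_sets reals.
Import Order.TTheory GRing.Theory Num.Theory.
Local Open Scope ring_scope.
Local Open Scope classical_set_scope.

(* A single-player extensive-form game tree.
   - [Inf] is the type of (labels of) Player-1 infosets; [nact I] is the number
     of actions available at infoset [I] (common to all its nodes).
   - [Leaf] is a terminal node.
   - [Chance n p ch] is a chance node with actions 'I_n, probabilities [p],
     and children [ch].
   - [Dec J ch] is a Player-1 node belonging to infoset [J].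
   A node / leaf is identified by the sequence of action indices on the path
   from the root to it. *)
Inductive tree (R : Type) (Inf : Type) (nact : Inf -> nat) : Type :=
| Leaf
| Chance (n : nat) (p : 'I_n -> R) (ch : 'I_n -> tree R Inf nact)
| Dec (I : Inf) (ch : 'I_(nact I) -> tree R Inf nact).

Arguments Leaf {R Inf nact}.
Arguments Chance {R Inf nact} n p ch.
Arguments Dec {R Inf nact} I ch.

Set Implicit Arguments. Unset Strict Implicit. Unset Printing Implicit Defensive.

Section Game.
Variables (R : realType) (Inf : eqType) (nact : Inf -> nat).
Local Notation tree := (tree R Inf nact).

Fixpoint wf_tree (t : tree) : Prop :=
  match t with
  | Leaf => True
  | Chance n p ch =>
      (0 < n)%N /\ (forall i, 0 <= p i) /\ \sum_(i < n) p i = 1 /\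
      (forall i, wf_tree (ch i))
  | Dec J ch => (0 < nact J)%N /\ (forall i, wf_tree (ch i))
  end.

Fixpoint noAM_from (seen : seq Inf) (t : tree) : Prop :=
  match t with
  | Leaf => True
  | Chance n p ch => forall i, noAM_from seen (ch i)
  | Dec J ch => J \notin seen /\ forall i, noAM_from (J :: seen) (ch i)
  end.

Definition no_absentmindedness (t : tree) : Prop := noAM_from [::] t.

Definition behavioral (s : forall I : Inf, 'I_(nact I) -> R) : Prop :=
  forall I, (forall a, 0 <= s I a) /\ \sum_(a < nact I) s I a = 1.

(* Expected utility of Player 1 under strategy [s] and utility [u] on leaves
   (leaves identified by their root-to-leaf action sequence). [path] is the
   reversed action sequence to the current node. *)
Fixpoint EU_from (u : seq nat -> R) (s : forall I : Inf, 'I_(nact I) -> R)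
    (path : seq nat) (t : tree) : R :=
  match t with
  | Leaf => u (rev path)
  | Chance n p ch => \sum_(i < n) p i * EU_from u s (nat_of_ord i :: path) (ch i)
  | Dec J ch => \sum_(a < nact J) s J a * EU_from u s (nat_of_ord a :: path) (ch a)
  end.

Definition EU (t : tree) (u : seq nat -> R) (s : forall I : Inf, 'I_(nact I) -> R) : R :=
  EU_from u s [::] t.

(* u_1(opt(Gamma)): the optimal (supremum = maximum) expected utility over
   behavioral strategies. *)
Definition opt_value (t : tree) (u : seq nat -> R) : R :=
  sup [set x | exists s, behavioral s /\ x = EU t u s].

(* For a chance node h, beta(h) = sum_a b_h(a), with b_h(a) = 1 if the
   subtree via a has no chance node, else the max of beta over its chance
   nodes. *)
Fixpoint has_chance (t : tree) : bool :=
  match t with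
  | Leaf => false
  | Chance _ _ _ => true
  | Dec J ch => [exists a, has_chance (ch a)]
  end.

Fixpoint max_beta (t : tree) : nat :=
  match t with
  | Leaf => 0%N
  | Chance n p ch =>
      maxn (\sum_(i < n) (if has_chance (ch i) then max_beta (ch i) else 1%N))
           (\max_(i < n) max_beta (ch i))
  | Dec J ch => \max_(a < nact J) max_beta (ch a)
  end.

Definition max_branching (t : tree) : nat :=
  if has_chance t then max_beta t else 1%N.

End Game.

(* pr_1(Gamma): same tree (and same utilities, since leaves are identified by
   their action paths), with each Player-1 node relabelled by the pair
   (infoset, obs_1(h)), where obs_1(h) is the list of (infoset, action) pairs
   of Player 1 along the root-to-h path (excluding h). Two nodes are in the
   same refined infoset iff they are in the same infoset of Gamma and have
   the same obs_1. *)
Fixpoint pr1_from (R : Type) (Inf : Type) (nact : Inf -> nat)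
    (hist : seq (Inf * nat)) (t : tree R Inf nact)
    : tree R (Inf * seq (Inf * nat)) (fun J => nact J.1) :=
  match t with
  | Leaf => Leaf
  | Chance n p ch => Chance n p (fun i => pr1_from hist (ch i))
  | Dec J ch =>
      @Dec R (Inf * seq (Inf * nat)) (fun K => nact K.1) (J, hist)
        (fun a => pr1_from (rcons hist (J, nat_of_ord a)) (ch a))
  end.

Definition pr1 (R : Type) (Inf : Type) (nact : Inf -> nat) (t : tree R Inf nact) :=
  pr1_from [::] t.

(* Main.v *)
Require Import Defs.
From HB Require Import structures.
From mathcomp Require Import all_boot all_order all_algebra.
From mathcomp Require Import classical_sets reals boolp.
From Stdlib Require List.
Import Order.TTheory GRing.Theory Num.Theory.
Local Open Scope ring_scope.

Lemma default_beh (R : realType) (I : eqType) (na : I -> nat) :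
  (forall i, (0 < na i)%N) -> exists s : forall i : I, 'I_(na i) -> R, behavioral s.
Proof.
move=> hpos; exists (fun i a => (nat_of_ord a == 0%N)%:R) => i.
split; first by move=> a; exact: ler0n.
rewrite (bigD1 (Ordinal (hpos i))) //= ?eqxx big1 ?addr0 // => a hab.
case: eqP => // ha; move: hab; have -> : a = Ordinal (hpos i) by apply: val_inj.
by rewrite eqxx.
Qed.

Section Proof.
Variables (R : realType) (Inf : eqType) (nact : Inf -> nat).
Variable (u : seq nat -> R).
Hypothesis u_ge0 : forall z, 0 <= u z.
Local Notation strat := (forall I : Inf, 'I_(nact I) -> R).

Lemma EU_ge0 (s : strat) (t : tree R Inf nact) path :
  wf_tree t -> behavioral s -> 0 <= EU_from u s path t.
Proof.
move=> + hs; elim: t path => [|n p ch IH|J ch IH] path /=.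
- by [].
- move=> [_ [hp [_ hw]]]; apply: sumr_ge0 => i _.
  by apply: mulr_ge0; [exact: hp | exact: IH].
- move=> [_ hw]; apply: sumr_ge0 => i _.
  by apply: mulr_ge0; [exact: (hs J).1 | exact: IH].
Qed.

Fixpoint ub (path : seq nat) (t : tree R Inf nact) : R :=
  match t with
  | Leaf => u (rev path)
  | Chance n p ch => \sum_(i < n) ub (nat_of_ord i :: path) (ch i)
  | Dec J ch => \sum_(a < nact J) ub (nat_of_ord a :: path) (ch a)
  end.

Lemma ub_ge0 path t : 0 <= ub path t.
Proof.
elim: t path => [|n p ch IH|J ch IH] path /=; first by [].
  by apply: sumr_ge0 => i _.
by apply: sumr_ge0 => i _.
Qed.

Lemma le1_of_sum n (f : 'I_n -> R) i : (forall j, 0 <= f j) -> \sum_j f j = 1 -> f i <= 1.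
Proof.
move=> h0 h1; rewrite -h1 (bigD1 i) //= lerDl; apply: sumr_ge0 => j _; exact: h0.
Qed.

Lemma EU_ub (s : strat) (t : tree R Inf nact) path :
  wf_tree t -> behavioral s -> EU_from u s path t <= ub path t.
Proof.
move=> + hs; elim: t path => [|n p ch IH|J ch IH] path /=.
- by [].
- move=> [_ [hp [h1 hw]]]; apply: ler_sum => i _.
  apply: (le_trans (y := p i * ub (nat_of_ord i :: path) (ch i))).
    by apply: ler_wpM2l; [exact: hp | exact: IH].
  rewrite -[leRHS]mul1r; apply: ler_wpM2r; first exact: ub_ge0.
  exact: le1_of_sum.
- move=> [_ hw]; apply: ler_sum => i _.
  apply: (le_trans (y := s J i * ub (nat_of_ord i :: path) (ch i))).
    by apply: ler_wpM2l; [exact: (hs J).1 | exact: IH].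
  rewrite -[leRHS]mul1r; apply: ler_wpM2r; first exact: ub_ge0.
  exact: le1_of_sum (hs J).1 (hs J).2.
Qed.

Definition upd (s : strat) (J : Inf) (b : nat) : strat :=
  fun I a => if I == J then (nat_of_ord a == b)%:R else s I a.

Lemma upd_beh s J (b : 'I_(nact J)) : behavioral s -> behavioral (upd s J b).
Proof.
move=> hs I; rewrite /upd; case: eqP => [->|_]; last exact: hs.
split; first by move=> a; exact: ler0n.
rewrite (bigD1 b) //= eqxx big1 ?addr0 // => a hab.
by rewrite -(inj_eq val_inj) in hab; rewrite (negbTE hab).
Qed.

Lemma EU_upd s J b seen t path :
  noAM_from seen t -> J \in seen -> EU_from u (upd s J b) path t = EU_from u s path t.
Proof.
elim: t seen path => [|n p ch IH|K ch IH] seen path /=.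
- by [].
- move=> h hJ; apply: eq_bigr => i _; congr (_ * _); exact: IH hJ.
- move=> [hK h] hJ; apply: eq_bigr => i _.
  have hKJ : (K == J) = false.
    by apply/negbTE; apply: contraNneq hK => ->.
  rewrite {1}/upd hKJ.
  congr (_ * _); apply: IH (h i) _; by rewrite in_cons hJ orbT.
Qed.


Lemma maxbeta_pos (t : tree R Inf nact) : wf_tree t -> has_chance t -> (0 < max_beta t)%N.
Proof.
elim: t => [|n p ch IH|J ch IH] //=.
- move=> [hn [_ [_ hw]]] _; apply: leq_trans _ (leq_maxl _ _).
  rewrite (bigD1 (Ordinal hn)) //=; apply: leq_trans _ (leq_addr _ _).
  by case: ifP => // h; exact: IH.
- move=> [_ hw] /existsP [a ha]; exact: leq_trans (IH a (hw a) ha) (leq_bigmax a).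
Qed.

Lemma B_pos (t : tree R Inf nact) : wf_tree t -> (0 < max_branching t)%N.
Proof. by rewrite /max_branching => hw; case: ifP => // h; exact: maxbeta_pos. Qed.

Lemma B_Dec J (ch : 'I_(nact J) -> tree R Inf nact) a :
  wf_tree (Dec J ch) -> (max_branching (ch a) <= max_branching (Dec J ch))%N.
Proof.
move=> [_ hw]; rewrite /max_branching /=.
case hc: (has_chance (ch a)).
  have -> : [exists a, has_chance (ch a)] by apply/existsP; exists a.
  exact: leq_bigmax.
case: ifP => // /existsP [a' ha'].
have h0 := @maxbeta_pos (ch a') (hw a') ha'.
exact: leq_trans h0 (leq_bigmax a').
Qed.

Lemma sum_le_list (l : seq strat) (F G : strat -> R) :
  (forall x, List.In x l -> F x <= G x) -> \sum_(x <- l) F x <= \sum_(x <- l) G x.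
Proof.
elim: l => [|y l IH] h; first by rewrite !big_nil.
rewrite !big_cons; apply: lerD; first by apply: h; left.
by apply: IH => x hx; apply: h; right.
Qed.

Lemma sum_le_const (l : seq strat) (F : strat -> R) c :
  (forall x, List.In x l -> F x <= c) -> \sum_(x <- l) F x <= (size l)%:R * c.
Proof.
elim: l => [|y l IH] h; first by rewrite big_nil mul0r.
rewrite big_cons /= -addn1 natrD mulrDl mul1r [in X in X <= _]addrC; apply: lerD; last by apply: h; left.
by apply: IH => x hx; apply: h; right.
Qed.

Lemma In_flatten (T : Type) (x : T) (ss : seq (seq T)) :
  List.In x (flatten ss) -> exists r, List.In r ss /\ List.In x r.
Proof.
elim: ss => [|r ss IH] //= /List.in_app_iff [h|h]; first by exists r; split; [left|].
by have [r' [h1 h2]] := IH h; exists r'; split; [right|].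
Qed.

Hypothesis nact_pos : forall I, (0 < nact I)%N.

Local Notation Inf' := (Inf * seq (Inf * nat))%type.
Local Notation nact' := (fun K : Inf' => nact K.1).

Lemma main (t : tree R Inf nact) seen hist path (s' : forall K : Inf', 'I_(nact' K) -> R) :
  wf_tree t -> noAM_from seen t -> @behavioral R _ nact' s' ->
  exists l : seq strat, [/\ (0 < size l)%N, (size l <= max_branching t)%N,
   (forall x, List.In x l -> behavioral x) &
   EU_from u s' path (pr1_from hist t) <= \sum_(x <- l) EU_from u x path t].
Proof.
move=> hw hn hs'.
elim: t seen hist path hw hn => [|n p ch IH|J ch IH] seen hist path /=.
- move=> _ _; have [s0 hs0] := @default_beh R Inf nact nact_pos.
  exists [:: s0]; split => //=.
    by move=> x [<-|[]].
  by rewrite big_cons big_nil addr0.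
- move=> [hn0 [hp [hp1 hw]]] hn.
  have : forall i : 'I_n, exists l : seq strat, [/\ (0 < size l)%N, (size l <= max_branching (ch i))%N,
   (forall x, List.In x l -> behavioral x) &
   EU_from u s' (nat_of_ord i :: path) (pr1_from hist (ch i)) <= \sum_(x <- l) EU_from u x (nat_of_ord i :: path) (ch i)].
    by move=> i; exact: IH.
  move/choice => [f hf].
  exists (flatten [seq f i | i <- index_enum 'I_n]).
  have hsz : size (flatten [seq f i | i <- index_enum 'I_n]) = (\sum_(i < n) size (f i))%N.
    by rewrite size_flatten /shape -map_comp sumnE big_map.
  split.
  + rewrite hsz (bigD1 (Ordinal hn0)) //=; apply: leq_trans _ (leq_addr _ _).
    by case: (hf (Ordinal hn0)).
  + rewrite hsz /max_branching /=; apply: leq_trans _ (leq_maxl _ _).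
    by apply: leq_sum => i _; case: (hf i).
  + move=> x /(@In_flatten _ x) [r [hr hx]].
    have [i [hi _]] := proj1 (List.in_map_iff _ _ _) hr; subst r.
    by case: (hf i) => _ _ H _; exact: H.
  + apply: (le_trans (y := \sum_(i<n) p i * \sum_(x <- f i) EU_from u x (nat_of_ord i :: path) (ch i))).
      apply: ler_sum => i _; apply: ler_wpM2l; [exact: hp | by case: (hf i)].
    rewrite big_flatten big_map /=.
    apply: ler_sum => i _; rewrite big_distrr /=; apply: sum_le_list => x hx.
    have hbx : behavioral x by case: (hf i) => _ _ H _; exact: H.
    rewrite (bigD1 i) //= lerDl; apply: sumr_ge0 => j _; apply: mulr_ge0; first exact: hp.
    exact: EU_ge0.
- move=> [hJ hw] [hnot hn].
  set V := fun a : 'I_(nact J) => EU_from u s' (nat_of_ord a :: path) (pr1_from (rcons hist (J, nat_of_ord a)) (ch a)).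
  have [am ham] : exists am, forall b, V b <= V am.
    exists [arg max_(i > Ordinal hJ) V i]%O.
    by case: arg_maxP => //= i _ H b; exact: H.
  have [l [h1 h2 h3 h4]] := IH am (J :: seen) (rcons hist (J, nat_of_ord am)) (nat_of_ord am :: path) (hw am) (hn am).
  exists (map (fun x => upd x J am) l); split.
  + by rewrite size_map.
  + rewrite size_map; apply: leq_trans h2 _; exact: (@B_Dec J ch am (conj hJ hw)).
  + move=> y hy; have [x [hxy hx]] := proj1 (List.in_map_iff _ _ _) hy; subst y; apply: upd_beh; exact: h3.
  + apply: (le_trans (y := V am)).
      apply: (le_trans (y := \sum_(a < nact J) s' (J,hist) a * V am)).
        apply: ler_sum => a _; apply: ler_wpM2l; [exact: (hs' (J,hist)).1 | exact: ham].
      by rewrite -big_distrl /= (hs' (J,hist)).2 mul1r.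
    apply: le_trans h4 _; rewrite big_map; apply: sum_le_list => x hx.
    have hupd : forall a : 'I_(nact J), upd x J am J a = (a == am)%:R.
      by move=> a; rewrite /upd eqxx.
    rewrite (bigD1 am) //= hupd eqxx mul1r big1 ?addr0.
      by rewrite (EU_upd x J am _ _ _ (hn am)) // mem_head.
    by move=> a ha; rewrite hupd (negbTE ha) mul0r.
Qed.
End Proof.


Theorem corollary4 (R : realType) (Inf : eqType) (nact : Inf -> nat)
  (Gamma : tree R Inf nact) :
  (forall I, (0 < nact I)%N) ->
  wf_tree Gamma ->
  no_absentmindedness Gamma ->
  forall u : seq nat -> R, (forall z, 0 <= u z) ->
  0 < opt_value Gamma u ->
  opt_value (pr1 Gamma) u / opt_value Gamma u <= (max_branching Gamma)%:R.
Proof.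
move=> hpos hw hnoAM u hu hopt.
set S : set R := (fun x => exists s, behavioral s /\ x = EU Gamma u s).
have hub : has_ubound S.
  exists (@ub R Inf nact u [::] Gamma) => x [s [hs ->]]; exact: EU_ub.
rewrite ler_pdivrMr //.
rewrite {1}/opt_value; apply: ge_sup.
  have [s0 hs0] := @default_beh R _ (fun K : Inf * seq (Inf * nat) => nact K.1) (fun K => hpos K.1).
  by exists (EU (pr1 Gamma) u s0); exists s0; split.
move=> x [s' [hs' ->]].
have [l [h1 h2 h3 h4]] := @main R Inf nact u hu hpos Gamma [::] [::] [::] s' hw hnoAM hs'.
apply: le_trans h4 _.
apply: le_trans (@sum_le_const R Inf nact l _ (opt_value Gamma u) _) _.
  move=> y hy; exact: (@ub_le_sup R S hub (EU Gamma u y) (ex_intro _ y (conj (h3 y hy) erefl))).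
apply: ler_wpM2r; [exact: ltW | by rewrite ler_nat].
Qed.
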